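(* Let $k \geq 2$ and let $G_1, \dots, G_k$ be finite simple Class 1 graphs. Then for each $i$ there is a finite simple graph $G_i^*$ obtained from $G_i$ by adding extra vertices and edges, such that $G_i^*$ is $\Delta(G_i)$-regular and Class 1, and such that whenever two edges of $G_1 \square \cdots \square G_k$ are at distance at least $3$ in $G_1 \square \cdots \square G_k$, they are also at distance at least $3$ in $G_1^* \square \cdots \square G_k^*$.
   Context: A graph $G$ is Class 1 if its chromatic index $\chi'(G)$ equals its maximum degree $\Delta(G)$. The Cartesian product $G \square H$ has vertex set $V(G)\times V(H)$, with $(u_1,u_2)$ adjacent to $(v_1,v_2)$ iff either $u_1=v_1$ and $u_2v_2 \in E(H)$, or $u_2=v_2$ and $u_1v_1\in E(G)$; iterated products are defined accordingly. The distance between vertices is the length of a shortest path between them (infinite if none), and the distance between edges $xy$ and $zw$ is $\min\{d(x,z),d(x,w),d(y,z),d(y,w)\}$. *)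

(* Defs.v *)
From mathcomp Require Import all_boot.
Set Implicit Arguments. Unset Strict Implicit. Unset Printing Implicit Defensive.

Record sgraph := SGraph {
  vert : finType;
  adj : rel vert;
  adj_sym : symmetric adj;
  adj_irr : irreflexive adj }.
Arguments adj : clear implicits.

Definition deg (G : sgraph) (x : vert G) : nat := #|[set y | adj G x y]|.

(* maximum degree Delta(G) (0 for the empty graph) *)
Definition maxdeg (G : sgraph) : nat := \max_(x : vert G) deg x.

Definition regular (G : sgraph) (r : nat) : Prop := forall x : vert G, deg x = r.

Definition edge_colorable (G : sgraph) (c : nat) : Prop :=
  exists col : vert G -> vert G -> nat,
    (forall x y, adj G x y -> col x y = col y x /\ col x y < c) /\
    (forall x y z, adj G x y -> adj G x z -> y != z -> col x y != col x z).

Definition is_chromatic_index (G : sgraph) (c : nat) : Prop :=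
  edge_colorable G c /\ forall c', edge_colorable G c' -> c <= c'.

Definition class1 (G : sgraph) : Prop := is_chromatic_index G (maxdeg G).

Definition prod_vert k (G : 'I_k -> sgraph) := {dffun forall i : 'I_k, vert (G i)}.

Definition prod_adj k (G : 'I_k -> sgraph) : rel (prod_vert G) :=
  fun x y => [exists i : 'I_k, adj (G i) (x i) (y i) &&
                 [forall j : 'I_k, (j != i) ==> (x j == y j)]].

Definition dist_le (T : Type) (e : rel T) (n : nat) (x y : T) : Prop :=
  exists p : seq T, [/\ path e x p, last x p = y & size p <= n].

Definition edge_dist_ge3 (T : Type) (e : rel T) (x y z w : T) : Prop :=
  ~ dist_le e 2 x z /\ ~ dist_le e 2 x w /\ ~ dist_le e 2 y z /\ ~ dist_le e 2 y w.

Arguments prod_adj {k} G.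
Definition prod_map k (G H : 'I_k -> sgraph) (f : forall i, vert (G i) -> vert (H i))
  (x : prod_vert G) : prod_vert H := [ffun i => f i (x i)].

(* Main.v *)
Require Import Defs.
From mathcomp Require Import all_boot.
From Stdlib Require Import IndefiniteDescription.
Set Implicit Arguments. Unset Strict Implicit. Unset Printing Implicit Defensive.

Section Build.
Variable G : sgraph.
Variable n : nat.
Local Notation D := n.+1.
Variable col : vert G -> vert G -> nat.
Hypothesis colP : forall x y, adj G x y -> col x y = col y x /\ col x y < D.
Hypothesis colD : forall x y z, adj G x y -> adj G x z -> y != z -> col x y != col x z.

Definition S := {ffun 'I_D -> bool}.
Definition flip (c : 'I_D) (s : S) : S := [ffun j => if j == c then ~~ s j else s j].

Lemma flipK c : involutive (flip c).
Proof. by move=> s; apply/ffunP => j; rewrite !ffunE; case: eqP => // _; rewrite negbK. Qed.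

Lemma flip_neq c s : flip c s != s.
Proof. apply/eqP => /ffunP /(_ c); rewrite ffunE eqxx; by case: (s c). Qed.

Lemma flip_inj s c c' : flip c s = flip c' s -> c = c'.
Proof.
move=> /ffunP /(_ c); rewrite !ffunE eqxx; case: eqP => // _.
by case: (s c).
Qed.

Definition present u (c : 'I_D) := [exists v, adj G u v && (col u v == c)].
Definition T := (vert G * S)%type.
Definition eadj : rel T := fun a b =>
  ((a.2 == b.2) && adj G a.1 b.1) ||
  ((a.1 == b.1) && [exists c, ~~ present a.1 c && (b.2 == flip c a.2)]).

Lemma eadj_sym : symmetric eadj.
Proof.
move=> [u s] [v t]; rewrite /eadj /= adj_sym [s == t]eq_sym; congr (_ || _).
case: (u =P v) => [->|/eqP]; last by rewrite eq_sym => /negbTE ->.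
rewrite eqxx /=.
by apply/existsP/existsP => -[c /andP [h /eqP e]]; exists c; rewrite h /=; apply/eqP; rewrite e flipK.
Qed.

Lemma eadj_irr : irreflexive eadj.
Proof.
move=> [u s]; rewrite /eadj /= adj_irr andbF /= eqxx /=.
apply/existsP => -[c /andP [_ /eqP e]].
by move: (flip_neq c s); rewrite -e eqxx.
Qed.

Definition Gs := SGraph eadj_sym eadj_irr.
Definition fS (v : vert G) : vert Gs := (v, [ffun => false]).
Definition pS (a : vert Gs) : vert G := a.1.

Definition colS (a b : T) : nat :=
  if a.2 == b.2 then col a.1 b.1 else
  match [pick c | b.2 == flip c a.2] with Some c => val c | None => 0 end.

Lemma cross_col (a : T) c : colS a (a.1, flip c a.2) = c.
Proof.
rewrite /colS /= eq_sym (negbTE (flip_neq _ _)).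
case: pickP => [c0 /eqP e|/(_ c)]; last by rewrite eqxx.
by rewrite (flip_inj e).
Qed.

Lemma eadjE (a b : T) : eadj a b ->
  (b.2 = a.2 /\ adj G a.1 b.1) \/
  (exists2 c, ~~ present a.1 c & b = (a.1, flip c a.2)).
Proof.
case: a b => [u s] [v t]; rewrite /eadj /= => /orP [/andP [/eqP -> h]|/andP [/eqP -> /existsP [c /andP [h /eqP ->]]]].
  by left.
by right; exists c.
Qed.

Lemma colS_ok : edge_colorable Gs D.
Proof.
exists colS; split.
  move=> a b /eadjE [[e h]|[c hc ->]].
    by rewrite /colS e eqxx; case: (colP h).
  rewrite cross_col; split => //.
  transitivity (colS (a.1, flip c a.2) ((a.1, flip c a.2).1, flip c (a.1, flip c a.2).2)).
    by rewrite cross_col.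
  by rewrite /= flipK; case: a {hc}.
move=> a b b' /eadjE [[e h]|[c hc ->]] /eadjE [[e' h']|[c' hc' ->]] nb.
- rewrite /colS e e' eqxx; apply: colD => //.
  apply: contra nb => /eqP eb; case: b b' e e' {h h'} eb => ? ? [? ?] /= -> -> ->; done.
- rewrite cross_col /colS e eqxx; apply: contra hc' => /eqP ec.
  by apply/existsP; exists b.1; rewrite h /= ec.
- rewrite cross_col /colS e' eqxx; apply: contra hc => /eqP ec.
  by apply/existsP; exists b'.1; rewrite h' /= ec.
- rewrite !cross_col; apply: contra nb => /eqP /val_inj ->; done.
Qed.


Lemma deg_present u : #|[set c | present u c]| = deg u.
Proof.
rewrite /deg -(@card_in_imset _ _ (fun v => inord (col u v) : 'I_D)).
  apply: eq_card => c; rewrite inE; apply/existsP/imsetP.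
    move=> [v /andP [h /eqP e]]; exists v; first by rewrite inE.
    by apply: val_inj; rewrite /= inordK ?e //; case: (colP h).
  move=> [v]; rewrite inE => h ->; exists v; rewrite h /= inordK //.
  by case: (colP h) => _ ->.
move=> v w; rewrite !inE => hv hw /(congr1 val) /=.
have cv := (colP hv).2; have cw := (colP hw).2.
rewrite !inordK // => e; apply/eqP; apply: contraT => nvw.
by move: (colD hv hw nvw); rewrite e eqxx.
Qed.

Lemma degS (a : vert Gs) : deg a = D.
Proof.
rewrite /deg.
have -> : [set b | adj Gs a b] =
  (fun v => (v, a.2)) @: [set v | adj G a.1 v] :|:
  (fun c => (a.1, flip c a.2)) @: [set c | ~~ present a.1 c].
  apply/setP => -[v t]; rewrite !inE; apply/idP/orP.
    move/eadjE => [[/= -> h]|[c hc [-> ->]]].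
      by left; apply/imsetP; exists v; rewrite ?inE.
    by right; apply/imsetP; exists c; rewrite ?inE.
  case=> /imsetP [x]; rewrite inE => h [-> ->]; rewrite /= /eadj /=.
    by rewrite eqxx h.
  by rewrite adj_irr andbF eqxx /=; apply/existsP; exists x; rewrite h eqxx.
rewrite cardsU.
have -> : (fun v => (v, a.2)) @: [set v | adj G a.1 v] :&:
  (fun c => (a.1, flip c a.2)) @: [set c | ~~ present a.1 c] = set0.
  apply/setP => b; rewrite !inE; apply/negbTE; apply/andP => -[/imsetP [x _ ->] /imsetP [c _ [_ e]]].
  by move: (flip_neq c a.2); rewrite -e eqxx.
rewrite cards0 subn0 !card_imset; first last.
- by move=> x y [].
- by move=> c c' [] e; apply: flip_inj e.
have -> : [set c | ~~ present a.1 c] = ~: [set c | present a.1 c].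
  by apply/setP => c; rewrite !inE.
by rewrite -[#|[set v | _]|]/(deg a.1) -deg_present cardsC card_ord.
Qed.

Lemma maxdegS (x0 : vert G) : maxdeg Gs = D.
Proof.
apply/eqP; rewrite eqn_leq; apply/andP; split.
  by apply/bigmax_leqP => a _; rewrite degS.
by rewrite -(degS (fS x0)) leq_bigmax.
Qed.

End Build.

Definition good (G Gs : sgraph) (f : vert G -> vert Gs) (p : vert Gs -> vert G) : Prop :=
  [/\ cancel f p, (forall x y, adj G x y -> adj Gs (f x) (f y)),
      regular Gs (maxdeg G), class1 Gs &
      (forall a b, adj Gs a b -> adj G (p a) (p b) \/ p a = p b)].

Lemma build (G : sgraph) : class1 G ->
  {Gs : sgraph & {f : vert G -> vert Gs & {p : vert Gs -> vert G | good f p}}}.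
Proof.
move=> h1.
case: (constructive_indefinite_description _ (proj1 h1)) => col [colP colD].
case E: (maxdeg G) => [|n].
  exists G, id, id; split => //.
  - move=> x; rewrite E /deg; apply: eq_card0 => y.
    rewrite !inE; apply/negbTE/negP => hy; have := (colP x y hy).2; by rewrite E.
  - by move=> a b h; left.
rewrite E in colP.
exists (Gs n col), (@fS G n col), (@pS G n col); split => //.
- by move=> x y h; rewrite /= /eadj /= eqxx h.
- by move=> a; rewrite E (degS colP colD).
- have [x0 _|none] := pickP (fun _ : vert G => true); last first.
    have : maxdeg G <= 0 by apply/bigmax_leqP => x _; have := none x.
    by rewrite E.
  rewrite /class1 (maxdegS colP colD x0); split; first exact: colS_ok.
  move=> c' [col' [P1 P2]]; rewrite -E; apply: (proj2 h1).
  exists (fun x y => col' (fS n col x) (fS n col y)); split.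
    by move=> x y hxy; apply: P1; rewrite /= /eadj /= eqxx hxy.
  move=> x y z hy hz nyz; apply: P2.
  + by rewrite /= /eadj /= eqxx hy.
  + by rewrite /= /eadj /= eqxx hz.
  + by apply: contra nyz => /eqP [] ->.
- by move=> a b /eadjE [[_ h]|[c _ ->]]; [left|right].
Qed.

Lemma path_proj (T U : Type) (e : rel T) (e' : rel U) (p : U -> T) :
  (forall a b, e' a b -> e (p a) (p b) \/ p a = p b) ->
  forall q a, path e' a q -> exists q',
    [/\ path e (p a) q', last (p a) q' = p (last a q) & size q' <= size q].
Proof.
move=> he; elim=> [|b q IH] a /=; first by exists [::].
move=> /andP [hab hq]; have [q' [h1 h2 h3]] := IH b hq.
case: (he _ _ hab) => hp.
  by exists (p b :: q'); rewrite /= hp h1 h2.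
by exists q'; rewrite hp; split => //; apply: leqW.
Qed.

Lemma dist_proj (T U : Type) (e : rel T) (e' : rel U) (p : U -> T) (g : T -> U) :
  (forall a b, e' a b -> e (p a) (p b) \/ p a = p b) ->
  (forall x, p (g x) = x) ->
  forall n x y, dist_le e' n (g x) (g y) -> dist_le e n x y.
Proof.
move=> he pg n x y [q [hq hl hs]]; have [q' [h1 h2 h3]] := path_proj he hq.
rewrite pg in h1 h2; rewrite hl pg in h2.
by exists q'; split => //; apply: leq_trans h3 hs.
Qed.

Theorem lemma2 (k : nat) (hk : 2 <= k) (G : 'I_k -> sgraph) :
  (forall i, class1 (G i)) ->
  exists (Gs : 'I_k -> sgraph) (f : forall i, vert (G i) -> vert (Gs i)),
    [/\ (forall i, injective (f i)),
        (forall i (x y : vert (G i)), adj (G i) x y -> adj (Gs i) (f i x) (f i y)),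
        (forall i, regular (Gs i) (maxdeg (G i))),
        (forall i, class1 (Gs i)) &
        (forall x y z w : prod_vert G,
           prod_adj G x y -> prod_adj G z w ->
           edge_dist_ge3 (prod_adj G) x y z w ->
           edge_dist_ge3 (prod_adj Gs) (prod_map f x) (prod_map f y)
                                       (prod_map f z) (prod_map f w))].
Proof.
move=> H.
pose B i := build (H i).
pose Gs i := projT1 (B i).
pose f i : vert (G i) -> vert (Gs i) := projT1 (projT2 (B i)).
pose p i : vert (Gs i) -> vert (G i) := sval (projT2 (projT2 (B i))).
have gp i : good (f i) (p i) := proj2_sig (projT2 (projT2 (B i))).
exists Gs, f; split.
- by move=> i; case: (gp i) => c _ _ _ _; apply: can_inj c.
- by move=> i; case: (gp i).
- by move=> i; case: (gp i).
- by move=> i; case: (gp i).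
have pf : forall x : prod_vert G, prod_map p (prod_map f x) = x.
  by move=> x; apply/ffunP => i; rewrite !ffunE; case: (gp i) => c _ _ _ _; rewrite c.
have he : forall a b, prod_adj Gs a b ->
    prod_adj G (prod_map p a) (prod_map p b) \/ prod_map p a = prod_map p b.
  move=> a b /existsP [i /andP [hi /forallP hj]].
  case: (gp i) => _ _ _ _ /(_ _ _ hi) [h|h].
    left; apply/existsP; exists i; rewrite !ffunE h /=.
    apply/forallP => j; apply/implyP => nj; rewrite !ffunE.
    by have /eqP -> := implyP (hj j) nj.
  right; apply/ffunP => j; rewrite !ffunE; case: (j =P i) => [->|/eqP nj] //.
  by have /eqP -> := implyP (hj j) nj.
move=> x y z w _ _ [d1 [d2 [d3 d4]]].
by split; [|split; [|split]] => /(dist_proj he pf).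
Qed.
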